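(* Let $q$ be a prime power, $b,k,t$ positive integers with $b\le k$, $a\in\mathbb{F}_q$ nonzero, and $\boldsymbol{x}_i=(a^i0^{k-i})\in\mathbb{F}_q^k$ (the first $i$ coordinates equal to $a$, the rest $0$) for $i\in\{0,1,\ldots,k-b+1\}$. Then \[ r_b^{wt_b}(k,t)\ge N_b\big(\boldsymbol{B}^{(1)}_{wt_b}(t,\boldsymbol{x}_0,\ldots,\boldsymbol{x}_{k-b+1})\big), \] where this $(k-b+2)\times(k-b+2)$ matrix (rows/columns indexed by $0,\ldots,k-b+1$) has entries $0$ for $i=j$ and $[2t-2b+3-|i-j|]^+$ for $i\ne j$.
   Context: For $\boldsymbol{z}=(z_0,\ldots,z_{n-1}),\boldsymbol{w}\in\mathbb{F}_q^n$, $d_b(\boldsymbol{z},\boldsymbol{w})$ is the number of $i\in\{0,\ldots,n-1\}$ with $(z_i,\ldots,z_{i+b-1})\ne(w_i,\ldots,w_{i+b-1})$ (indices mod $n$), and $wt_b(\boldsymbol{x})=d_b(\boldsymbol{x},\boldsymbol{0})$ is the $b$-symbol weight function on $\mathbb{F}_q^k$. $[x]^+=\max\{x,0\}$. A systematic encoding $\mathrm{Enc}(\boldsymbol{x})=(\boldsymbol{x},p(\boldsymbol{x}))\in\mathbb{F}_q^{k+r}$ is a function-correcting $b$-symbol code for $f$ if $d_b(\mathrm{Enc}(\boldsymbol{x}_1),\mathrm{Enc}(\boldsymbol{x}_2))\ge 2t+1$ whenever $f(\boldsymbol{x}_1)\ne f(\boldsymbol{x}_2)$; $r_b^f(k,t)$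 is the smallest $r$ for which one exists. For an $M\times M$ nonnegative integer matrix $\boldsymbol{B}$, $N_b(\boldsymbol{B})$ is the smallest $r$ such that there exist $\boldsymbol{p}_1,\ldots,\boldsymbol{p}_M\in\mathbb{F}_q^r$ (in some ordering) with $d_b(\boldsymbol{p}_i,\boldsymbol{p}_j)\ge[\boldsymbol{B}]_{ij}$ for all $i,j$. *)

(* Defs.v *)
From mathcomp Require Import all_boot all_order all_algebra.
Set Implicit Arguments. Unset Strict Implicit. Unset Printing Implicit Defensive.
Import GRing.Theory.
Local Open Scope ring_scope.

Definition coordm (F : finFieldType) (n : nat) (z : 'rV[F]_n) (m : nat) : F :=
  match @insub nat (fun j => j < n)%N _ (m %% n)%N with
  | Some j => z ord0 j
  | None => 0
  end.

Definition dsym (F : finFieldType) (b n : nat) (z w : 'rV[F]_n) : nat :=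
  #|[set i : 'I_n | [exists s : 'I_b, coordm z (i + s)%N != coordm w (i + s)%N]]|.

Definition wtsym (F : finFieldType) (b n : nat) (x : 'rV[F]_n) : nat :=
  dsym b x 0.

(* p : F^k -> F^r defines a function-correcting b-symbol code for f
   (systematic encoding Enc(x) = (x, p(x)) in F^(k+r)) *)
Definition is_fcbsc (F : finFieldType) (T : eqType) (b k r t : nat)
  (f : 'rV[F]_k -> T) (p : 'rV[F]_k -> 'rV[F]_r) : Prop :=
  forall x1 x2 : 'rV[F]_k, f x1 != f x2 ->
    (2 * t + 1 <= dsym b (row_mx x1 (p x1)) (row_mx x2 (p x2)))%N.

(* "r_b^f(k,t) >= N" : every redundancy r admitting an FCC is >= N *)
Definition Nb_feasible (F : finFieldType) (b M r : nat) (B : 'I_M -> 'I_M -> nat) : Prop :=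
  exists P : 'I_M -> 'rV[F]_r, forall i j : 'I_M, (B i j <= dsym b (P i) (P j))%N.

Definition Bmat1 (b k t : nat) (i j : 'I_(k - b + 2)) : nat :=
  if i == j then 0%N else ((2 * t + 3) - (2 * b + ((i - j) + (j - i))))%N.

(* Main.v *)
Require Import Defs.
From mathcomp Require Import all_boot all_order all_algebra.
From mathcomp Require Import zify.

Section Aux.
Variable F : finFieldType.

Lemma coordm_lt n (z : 'rV[F]_n) j (Hj : (j < n)%N) :
  coordm z j = z ord0 (Ordinal Hj).
Proof.
rewrite /coordm modn_small // insubT /=; congr (z _ _).
Qed.

Arguments coordm_lt {n z j}.

Lemma coordm_mod n (z : 'rV[F]_n) m : coordm z m = coordm z (m %% n).
Proof. by rewrite /coordm modn_mod. Qed.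

Lemma card_interval n lo hi :
  (#|[set i : 'I_n | (lo <= i < hi)%N]| <= hi - lo)%N.
Proof.
elim: hi => [|hi IH].
  rewrite (_ : [set _ | _] = set0) ?cards0 //.
  by apply/setP => i; rewrite !inE ltn0 andbF.
case: (leqP lo hi) => hlo; last first.
  rewrite (_ : [set _ | _] = set0) ?cards0 //.
  apply/setP => i; rewrite !inE; apply/negbTE; rewrite negb_and -ltnNge -leqNgt.
  case: (ltnP i lo) => //= h; exact: leq_trans hlo h.
apply: (leq_trans (subset_leq_card (_ : _ \subset
   [set i : 'I_n | (lo <= i < hi)%N] :|: [set i : 'I_n | val i == hi]))).
  apply/subsetP => i; rewrite !inE /= ltnS; case/andP => -> /=; by case: ltngtP.
apply: (leq_trans (leq_card_setU _ _)).
have H1 : (#|[set i : 'I_n | val i == hi]| <= 1)%N.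
  apply/card_le1_eqP => x y; rewrite !inE => /eqP hx /eqP hy.
  by apply: val_inj; rewrite hx hy.
lia.
Qed.

Lemma row_mx_ent k r (x : 'rV[F]_k) (p : 'rV[F]_r) (j : 'I_(k + r)) :
  row_mx x p ord0 j =
  if (j < k)%N then coordm x j else coordm p (j - k).
Proof.
case: splitP => [j1 hj|j2 hj].
  have -> : j = lshift r j1 by apply: val_inj.
  rewrite row_mxEl /= (coordm_lt (ltn_ord j1)); congr (x _ _); exact: val_inj.
have -> : j = rshift k j2 by apply: val_inj.
rewrite row_mxEr /= addKn (coordm_lt (ltn_ord j2)); congr (p _ _); exact: val_inj.
Qed.

Lemma dsym_bound b k r (x1 x2 : 'rV[F]_k) (p1 p2 : 'rV[F]_r) m M :
  (0 < b)%N -> (b <= k)%N -> (m <= M)%N ->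
  (forall j : 'I_k, x1 ord0 j != x2 ord0 j -> (m <= j < M)%N) ->
  (dsym b (row_mx x1 p1) (row_mx x2 p2) <= (M + 2 * b - 2 - m) + dsym b p1 p2)%N.
Proof.
move=> b0 bk hmM0 Hx.
set n := (k + r)%N.
have n0 : (0 < n)%N by rewrite /n; lia.
set Dp := [set i : 'I_r | [exists s : 'I_b, coordm p1 (i + s)%N != coordm p2 (i + s)%N]].
set C1 := [set i : 'I_n | (m.+1 - b <= i < M)%N].
set C1' := [set i : 'I_n | (n + m.+1 - b <= i < n)%N].
set C2 := [set i : 'I_n | (k.+1 - b <= i < k)%N].
set C3 := (@rshift k r) @: Dp.
have sub : [set i : 'I_n | [exists s : 'I_b,
   coordm (row_mx x1 p1) (i + s)%N != coordm (row_mx x2 p2) (i + s)%N]]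
   \subset (C1 :|: C1') :|: (C2 :|: C3).
  apply/subsetP => i; rewrite inE => /existsP [s].
  rewrite (coordm_mod _ (row_mx x1 p1)) (coordm_mod _ (row_mx x2 p2)).
  have hpos := ltn_pmod (i + s) n0.
  rewrite (coordm_lt hpos) (coordm_lt hpos) !row_mx_ent /=.
  have hi := ltn_ord i; have hs := ltn_ord s.
  case: ltnP => hk.
    rewrite (coordm_lt hk) (coordm_lt hk) => /Hx /= hmM.
    rewrite !inE.
    case: (ltnP (i + s) n) => hin.
      move: hmM; rewrite modn_small //= => hmM.
      apply/orP; left; apply/orP; left; lia.
    have e : ((i + s) %% n = i + s - n)%N.
      rewrite -{1}(subnK hin) modnDr modn_small //; lia.
    move: hmM; rewrite e => hmM.
    apply/orP; left; apply/orP; right; lia.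
  move=> hne.
  case: (ltnP (i + s) n) => hin; last first.
    exfalso.
    have e : ((i + s) %% n = i + s - n)%N.
      rewrite -{1}(subnK hin) modnDr modn_small //; lia.
    move: hk; rewrite e; lia.
  move: hk hne; rewrite modn_small // => hk hne.
  rewrite !inE.
  case: (ltnP i k) => hik.
    apply/orP; right; apply/orP; left; lia.
  apply/orP; right; apply/orP; right.
  have hr : (i - k < r)%N by lia.
  apply/imsetP; exists (Ordinal hr).
    rewrite inE; apply/existsP; exists s.
    have hr2 : (i - k + s < r)%N by lia.
    rewrite /= (coordm_lt hr2) (coordm_lt hr2).
    move: hne; rewrite (_ : (i + s - k)%N = (i - k + s)%N); last by lia.
    by rewrite (coordm_lt hr2) (coordm_lt hr2).
  apply: val_inj => /=; lia.
rewrite /dsym.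
apply: (leq_trans (subset_leq_card sub)).
apply: (leq_trans (leq_card_setU _ _).1).
have c1 := card_interval n (m.+1 - b) M.
have c1' := card_interval n (n + m.+1 - b) n.
have c2 := card_interval n (k.+1 - b) k.
have c3 : (#|C3| <= #|Dp|)%N by apply: leq_imset_card.
rewrite -/C1 -/C1' -/C2 in c1 c1' c2.
have e1' := (leq_card_setU C1 C1').1.
have e2' := (leq_card_setU C2 C3).1.
rewrite /n in c1'.
rewrite -/Dp. apply: leq_trans (leq_add e1' e2') _. apply: (leq_trans (n := (M - (m.+1 - b) + (k + r - (k + r + m.+1 - b)) + ((k - (k.+1 - b)) + #|Dp|))%N)). by rewrite !leq_add //. lia.
Qed.

Definition xv k (a : F) (i : nat) : 'rV[F]_k :=
  \row_(j < k) (if (j < i)%N then a else 0%R).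

Lemma coordm_xv k a i m : (0 < k)%N ->
  coordm (xv k a i) m = if (m %% k < i)%N then a else 0%R.
Proof.
move=> k0; rewrite (coordm_mod _ (xv k a i)) (coordm_lt (ltn_pmod m k0)) mxE //.
Qed.

Lemma coordm_0 k m : (0 < k)%N -> coordm (0 : 'rV[F]_k) m = 0%R.
Proof.
move=> k0; rewrite (coordm_mod _ (0 : 'rV[F]_k)) (coordm_lt (ltn_pmod m k0)) mxE //.
Qed.

Lemma wt_lt b k a i j : (0 < b)%N -> (b <= k)%N -> a != 0%R -> (i < j)%N ->
  (j <= k - b + 1)%N -> (wtsym b (xv k a i) < wtsym b (xv k a j))%N.
Proof.
move=> b0 bk a0 ij jk.
have k0 : (0 < k)%N by lia.
rewrite /wtsym /dsym; apply: proper_card; apply/properP; split.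
  apply/subsetP => w; rewrite !inE => /existsP [s H]; apply/existsP; exists s.
  move: H; rewrite !coordm_xv // !coordm_0 //.
  case: ifP; last by rewrite eqxx.
  move=> h _; have -> : (((w + s) %% k) < j)%N by lia.
  by [].
have hw : (j.-1 < k)%N by lia.
exists (Ordinal hw); rewrite !inE.
  apply/existsP; exists (Ordinal b0); rewrite coordm_xv // coordm_0 //=.
  rewrite addn0 modn_small //; have -> : (j.-1 < j)%N by lia.
  by [].
apply/negP => /existsP [s]; rewrite coordm_xv // coordm_0 //=.
have hs := ltn_ord s.
rewrite modn_small; last by lia.
by rewrite ifF ?eqxx //; apply/negbTE; rewrite -leqNgt; lia.
Qed.

End Aux.
Arguments xv {F}.
Arguments wt_lt {F}.

Theorem lemma6p2 (F : finFieldType) (b k t : nat) (a : F) :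
  (0 < b)%N -> (b <= k)%N -> (0 < t)%N -> (a != 0)%R ->
  forall r : nat,
    (exists p : 'rV[F]_k -> 'rV[F]_r, is_fcbsc b t (@wtsym F b k) p) ->
    exists r' : nat, (r' <= r)%N /\ Nb_feasible F b r' (@Bmat1 b k t).
Proof.
move=> b0 bk t0 a0 r [p Hp]; exists r; split => //.
exists (fun i : 'I_(k - b + 2) => p (xv k a i)) => i j.
rewrite /Bmat1; case: eqVneq => [_|ne] //.
have hi := ltn_ord i; have hj := ltn_ord j.
have Hw : wtsym b (xv k a i) != wtsym b (xv k a j).
  case: (ltngtP i j) => h.
  - by rewrite neq_ltn (wt_lt _ _ _ _ _ b0 bk a0 h) //; lia.
  - by rewrite neq_ltn (wt_lt _ _ _ _ _ b0 bk a0 h) ?orbT //; lia.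
  - by move: ne; rewrite (val_inj h) eqxx.
have H1 := Hp _ _ Hw.
have Hx : forall l : 'I_k, xv k a i ord0 l != xv k a j ord0 l ->
    (minn i j <= l < maxn i j)%N.
  move=> l; rewrite !mxE.
  case: (ltnP l i) => h1; case: (ltnP l j) => h2; rewrite ?eqxx // => _; lia.
have H2 := @dsym_bound F b k r (xv k a i) (xv k a j) (p (xv k a i)) (p (xv k a j))
  (minn i j) (maxn i j) b0 bk (leq_trans (geq_minl _ _) (leq_maxl _ _)) Hx.
lia.
Qed.
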